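(* Let $D\in\mathcal{U}(n,s_1\cdots s_{p+q})$ (first $p$ factors qualitative, last $q$ quantitative), let $N=\prod_{k=1}^{p+q}s_k$ and $y=y(D)$. Then $$\mathrm{QQD}^2(D)=-\prod_{k=1}^{p}\left(\frac{5s_k+1}{4s_k}\right)\left(\frac43\right)^q+\frac{1}{n^2}y^TAy,$$ where $A=A_1\otimes A_2\otimes\cdots\otimes A_{p+q}$ ($\otimes$ the Kronecker product), $A_k=(t^k_{ij})_{i,j=1}^{s_k}$, with $t^k_{ij}=(3/2)^{\delta_{ij}}(5/4)^{1-\delta_{ij}}$ for $k=1,\dots,p$ and $t^k_{ij}=\frac32-\frac{|i-j|(s_k-|i-j|)}{s_k^2}$ for $k=p+1,\dots,p+q$.
   Context: A U-type design in $\mathcal{U}(n,s_1\cdots s_{p+q})$ is an $n\times(p+q)$ matrix whose $k$th column takes each value in $\{0,\dots,s_k-1\}$ equally often; the first $p$ columns are qualitative, the last $q$ quantitative. For quantitative columns a level $x$ is transformed to $(2x+1)/(2s_k)\in[0,1]$. Let $\chi=\prod_k\chi_k$, $\chi_k=\{0,\dots,s_k-1\}$ for $k\le p$, $\chi_k=[0,1]$ for $k>p$, and $F$ the uniform distribution on $\chi$. Kernel: $\mathcal{K}(t,z)=\prod_k\mathcal{K}_k(t_k,z_k)$ with $\mathcal{K}_k=(3/2)^{\delta_{t_kz_k}}(5/4)^{1-\delta_{t_kz_k}}$ for $k\le p$ ($\delta$ the Kronecker delta) and $\mathcal{K}_k=\frac32-|t_k-z_k|+|t_k-z_k|^2$ for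 $k>p$. For $D$ with (transformed) rows $x_1,\dots,x_n$, $\mathrm{QQD}^2(D)=\int_{\chi^2}\mathcal{K}\,dF\,dF-\frac2n\sum_i\int_\chi\mathcal{K}(t,x_i)dF(t)+\frac1{n^2}\sum_{i,j}\mathcal{K}(x_i,x_j)$. The vector $y(D)$ is the $N$-dimensional column vector whose entries $n(i_1,\dots,i_{p+q})$, arranged in lexicographic order of $(i_1,\dots,i_{p+q})$, are the numbers of runs of $D$ at level combination $(i_1,\dots,i_{p+q})$. *)

(* Defs.v *)
From HB Require Import structures.
From mathcomp Require Import all_boot all_order all_algebra.
From mathcomp Require Import all_classical all_reals all_analysis.
From mathcomp Require Import mxtens.
Set Implicit Arguments. Unset Strict Implicit. Unset Printing Implicit Defensive.
Import Order.TTheory GRing.Theory Num.Theory.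
Import numFieldNormedType.Exports.
Local Open Scope classical_set_scope.
Local Open Scope ring_scope.

(* s : seq nat lists s_1,...,s_{p+q} (0-based: s_k = nth 0 s k). *)
Definition sk (s : seq nat) (k : nat) : nat := nth 0%N s k.

Definition Utype (n m : nat) (s : seq nat) (D : 'M[nat]_(n, m)) : Prop :=
  size s = m /\
  (forall (i : 'I_n) (k : 'I_m), (D i k < sk s k)%N) /\
  (forall (k : 'I_m) (a b : nat), (a < sk s k)%N -> (b < sk s k)%N ->
     #|[set i : 'I_n | D i k == a]| = #|[set i : 'I_n | D i k == b]|).

Section QQD.
Variable R : realType.
Variables (p q : nat) (s : seq nat).

(* one-dimensional kernels K_k (k is 0-based: k < p qualitative) *)
Definition Kk (k : nat) (a b : R) : R :=
  if (k < p)%N then (3/2) ^+ (a == b) * (5/4) ^+ (1 - (a == b))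
  else 3/2 - `|a - b| + `|a - b| ^+ 2.

(* points of chi are represented as functions nat -> R (coordinates 0..p+q-1) *)
Definition Kern (t z : nat -> R) : R := \prod_(k < p + q) Kk k (t k) (z k).

(* integration of a function of one coordinate w.r.t. the uniform
   distribution on chi_k *)
Definition int1 (k : nat) (g : R -> R) : R :=
  if (k < p)%N then (sk s k)%:R^-1 * \sum_(a < sk s k) g a%:R
  else (\int[lebesgue_measure]_(x in `[0, 1]) g x)%R.

(* integral over chi = chi_0 x ... x chi_{m-1} w.r.t. the product uniform
   distribution F, computed coordinate by coordinate (Fubini). *)
Fixpoint intF (m : nat) (f : (nat -> R) -> R) : R :=
  match m with
  | 0 => f (fun _ => 0)
  | m'.+1 => int1 m' (fun x =>
               intF m' (fun t => f (fun j => if j == m' then x else t j)))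
  end.

Definition lvl (n : nat) (D : 'M[nat]_(n, p + q)) (r : 'I_n) (k : nat) : nat :=
  nth 0%N [seq D r j | j <- enum 'I_(p + q)] k.

Definition xrow (n : nat) (D : 'M[nat]_(n, p + q)) (r : 'I_n) : nat -> R :=
  fun k => if (k < p)%N then (lvl D r k)%:R
           else (2 * lvl D r k + 1)%:R / (2 * sk s k)%:R.

Definition QQD2 (n : nat) (D : 'M[nat]_(n, p + q)) : R :=
  intF (p + q) (fun t => intF (p + q) (fun z => Kern t z))
  - 2 / n%:R * \sum_(i < n) intF (p + q) (fun t => Kern t (xrow D i))
  + n%:R ^- 2 * \sum_(i < n) \sum_(j < n) Kern (xrow D i) (xrow D j).

Fixpoint prodl (l : seq nat) : nat :=
  match l with [::] => 1%N | a :: l' => (a * prodl l')%N end.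

Fixpoint lexidx (l c : seq nat) : nat :=
  match l, c with
  | a :: l', x :: c' => (x * prodl l' + lexidx l' c')%N
  | _, _ => 0%N
  end.

(* y(D): number of runs at each level combination, lexicographic order *)
Definition yvec (n : nat) (D : 'M[nat]_(n, p + q)) : 'cV[R]_(prodl s) :=
  \col_(i < prodl s)
    #|[set r : 'I_n | lexidx s [seq D r j | j <- enum 'I_(p + q)] == i]|%:R.

(* entries t^k_{ij} (0-based indices; only |i-j| and delta_ij matter) *)
Definition tk (k sz i j : nat) : R :=
  if (k < p)%N then (3/2) ^+ (i == j) * (5/4) ^+ (1 - (i == j))
  else 3/2 - (`|(i%:Z - j%:Z)%R|%N * (sz - `|(i%:Z - j%:Z)%R|%N))%:R / (sz ^ 2)%:R.

Definition Ak (k sz : nat) : 'M[R]_sz := \matrix_(i < sz, j < sz) tk k sz i j.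

Fixpoint kronA (k : nat) (l : seq nat) : 'M[R]_(prodl l) :=
  match l return 'M[R]_(prodl l) with
  | [::] => 1%:M
  | a :: l' => tensmx (Ak k a) (kronA k.+1 l')
  end.

Definition Amx : 'M[R]_(prodl s) := kronA 0 s.

End QQD.

(* Main.v *)
Require Import Defs.
From HB Require Import structures.
From mathcomp Require Import all_boot all_order all_algebra.
From mathcomp Require Import all_classical all_reals all_analysis.
From mathcomp Require Import mxtens.
From mathcomp Require Import ring lra.
Import Order.TTheory GRing.Theory Num.Theory.
Import numFieldNormedType.Exports.
Local Open Scope classical_set_scope.
Local Open Scope ring_scope.

Section Q.
Variable R : realType.
Let mu := @lebesgue_measure R.

Lemma ftc_poly (F : {poly R}) u v : u <= v ->
  \int[mu]_(x in `[u, v]) (F^`()).[x] = F.[v] - F.[u].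
Proof.
rewrite le_eqVlt => /predU1P[<-|uv].
  by rewrite set_itv1 Rintegral_set1 subrr.
rewrite /Rintegral (@continuous_FTC2 _ _ (horner F))//.
- by apply: continuous_in_subspaceT => x ?; exact: continuous_horner.
- split.
  + by move=> x _; exact: derivable_horner.
  + by apply: cvg_at_right_filter; exact: continuous_horner.
  + by apply: cvg_at_left_filter; exact: continuous_horner.
- by move=> x _; rewrite -derivE.
Qed.

Lemma ftc_quad (al be ga u v : R) : u <= v ->
  \int[mu]_(x in `[u, v]) (al + be * x + ga * x ^+ 2) =
  (al * v + be / 2 * v ^+ 2 + ga / 3 * v ^+ 3) - (al * u + be / 2 * u ^+ 2 + ga / 3 * u ^+ 3).
Proof.
move=> uv.
pose F : {poly R} := al *: 'X + (be / 2) *: 'X^2 + (ga / 3) *: 'X^3.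
have -> : (fun x => al + be * x + ga * x ^+ 2) = horner (F^`()).
  apply/funext => x; rewrite /F !(derivD, derivZ, derivXn, derivX) !hornerE /=.
  by field.
by rewrite ftc_poly // /F !hornerE.
Qed.

Lemma cont_f c b : continuous (fun x : R => c * (3/2 - `|x - b| + `|x - b| ^+ 2)).
Proof.
move=> x.
have h : (fun y : R => `|y - b|) @ x --> `|x - b|.
  by apply: cvg_norm; apply: cvgB; [exact: cvg_id|exact: cvg_cst].
apply: cvgM; first exact: cvg_cst.
apply: cvgD; first by apply: cvgB; [exact: cvg_cst|exact: h].
by rewrite expr2; apply: cvgM; exact: h.
Qed.


Lemma int_f c b : 0 <= b <= 1 ->
  \int[mu]_(x in `[0, 1]) (c * (3/2 - `|x - b| + `|x - b| ^+ 2)) = c * (4 / 3).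
Proof.
case/andP=> b0 b1.
pose f := fun x : R => c * (3/2 - `|x - b| + `|x - b| ^+ 2).
rewrite -/(Rintegral mu `[0, 1] f).
have itf : mu.-integrable `[0, 1] (EFin \o f).
  apply: continuous_compact_integrable; first exact: segment_compact.
  by apply: continuous_in_subspaceT => x _; exact: cont_f.
have := @Rintegral_itvB R f (BLeft 0) (BRight 1) b itf.
rewrite !bnd_simp => /(_ b0 b1) /eqP; rewrite subr_eq => /eqP ->.
rewrite Rintegral_itv_obnd_cbnd; last first.
  by apply: integrableS itf => //; apply: subset_itvr; rewrite bnd_simp.
have e1 : \int[mu]_(x in `[0, b]) f x = \int[mu]_(x in `[0, b]) (c * (3/2 - b + b^+2) + c * (1 - 2 * b) * x + c * x ^+ 2).
  apply: eq_Rintegral => x; rewrite inE /= in_itv /= => /andP[x0 xb].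
  rewrite /f ler0_norm ?subr_le0 //; ring.
have e2 : \int[mu]_(x in `[b, 1]) f x = \int[mu]_(x in `[b, 1]) (c * (3/2 + b + b^+2) + c * (- 1 - 2 * b) * x + c * x ^+ 2).
  apply: eq_Rintegral => x; rewrite inE /= in_itv /= => /andP[bx x1].
  rewrite /f ger0_norm ?subr_ge0 //; ring.
rewrite /mu in e1 e2; rewrite e1 e2.
by rewrite !ftc_quad //; field.
Qed.

End Q.

Section F.
Variable R : realType.
Variables (p : nat) (s : seq nat).

Definition dom (k : nat) (x : R) : Prop :=
  if (k < p)%N then exists2 c, (c < sk s k)%N & x = c%:R else 0 <= x <= 1.

Lemma int1_ext k (g g' : R -> R) : (forall x, dom k x -> g x = g' x) ->
  int1 p s k g = int1 p s k g'.
Proof.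
rewrite /int1 /dom; case: ifP => kp H.
  by congr (_ * _); apply: eq_bigr => i _; apply: H; exists i.
apply: eq_Rintegral => x; rewrite inE /= in_itv /= => hx.
by apply: H.
Qed.

Lemma intF_ext m (f f' : (nat -> R) -> R) :
  (forall t, (forall k, (k < m)%N -> dom k (t k)) -> f t = f' t) ->
  intF p s m f = intF p s m f'.
Proof.
elim: m f f' => [|m IH] f f' H /=; first by apply: H.
apply: int1_ext => x hx; apply: IH => t ht; apply: H => k km.
case: eqP => [->//|/eqP kn]; apply: ht.
by rewrite ltnS leq_eqVlt (negbTE kn) in km.
Qed.

Lemma intF_prod m (c : R) (g : nat -> R -> R) (I : nat -> R) :
  (forall k, (k < m)%N -> forall c', int1 p s k (fun x => c' * g k x) = c' * I k) ->
  intF p s m (fun t => c * \prod_(k < m) g k (t k)) = c * \prod_(k < m) I k.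
Proof.
elim: m c => [|m IH] c H /=; first by rewrite !big_ord0.
have -> : (fun x : R => intF p s m (fun t => c * \prod_(k < m.+1)
            g k (if (k : nat) == m then x else t k)))
          = (fun x => intF p s m (fun t => (c * g m x) * \prod_(k < m) g k (t k))).
  apply/funext => x; congr intF; apply/funext => t.
  rewrite big_ord_recr /= eqxx mulrA [in RHS]mulrAC; congr (_ * _ * _).
  by apply: eq_bigr => i _; rewrite /= ifN // neq_ltn ltn_ord.
have -> : (fun x => intF p s m (fun t => (c * g m x) * \prod_(k < m) g k (t k)))
   = (fun x => (c * \prod_(k < m) I k) * g m x).
  apply/funext => x; rewrite IH; first by rewrite mulrAC.
  by move=> k km; apply: H; apply: ltnW.
by rewrite H // big_ord_recr /= mulrA.
Qed.

End F.

Section G.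
Variable R : realType.
Variables (p : nat) (s : seq nat).

Definition Cst (k : nat) : R :=
  if (k < p)%N then (5 * sk s k + 1)%:R / (4 * sk s k)%:R else 4 / 3.

Lemma Kk_sym k (a b : R) : @Kk R p k a b = @Kk R p k b a.
Proof. by rewrite /Kk eq_sym distrC. Qed.

Lemma int1_K k (a c' : R) : @dom R p s k a ->
  int1 p s k (fun x => c' * @Kk R p k a x) = c' * Cst k.
Proof.
rewrite /dom /int1 /Cst; case: ifP => kp.
  case=> b hb ->; set S := sk s k.
  have S0 : (S%:R : R) != 0 by rewrite pnatr_eq0 -lt0n (leq_ltn_trans _ hb).
  have eK : forall i : 'I_S, c' * @Kk R p k b%:R i%:R = c' * (5/4) + c' * ((b == i)%:R / 4).
    move=> i; rewrite /Kk kp eqr_nat; case: eqP => _ /=; rewrite ?expr1 ?expr0; by field.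
  under eq_bigr => i _ do rewrite eK.
  rewrite big_split /= sumr_const card_ord -mulr_sumr -mulr_suml.
  have -> : \sum_(i < S) ((b == i)%:R : R) = 1.
    rewrite (bigD1 (Ordinal hb)) //= eqxx big1 ?addr0 // => i ne.
    case: eqP => // bi; case/eqP: ne; exact: val_inj.
  rewrite -mulr_natr natrD !natrM.
  by field; exact: S0.
move=> ha; rewrite /Kk kp -(@int_f R c' a ha).
by apply: eq_Rintegral => x _; rewrite distrC.
Qed.

Lemma int1_1 k (c' : R) : ((k < p)%N -> (0 < sk s k)%N) ->
  int1 p s k (fun x => c' * 1) = c' * 1.
Proof.
rewrite /int1; case: ifP => kp H.
  have S0 : ((sk s k)%:R : R) != 0 by rewrite pnatr_eq0 -lt0n H.
  by rewrite sumr_const card_ord -mulr_natr; field; exact: S0.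
rewrite (@Rintegral_cst _ _ R (@lebesgue_measure R) `[0, 1]%classic) //.
have -> : fine (lebesgue_measure (`[0, 1]%classic : set R)) = 1.
  by rewrite lebesgue_measure_itv /= lte_fin ltr01 oppr0 adde0.
by rewrite mulr1.
Qed.

End G.

Section K.
Variable R : realType.
Variable p : nat.

Lemma lexidx_lt (l c : seq nat) : size c = size l ->
  (forall j, (j < size l)%N -> (nth 0 c j < nth 0 l j)%N) ->
  (lexidx l c < prodl l)%N.
Proof.
elim: l c => [|a l IH] [|x c] //= [sz] H.
have hx : (x < a)%N by apply: (H 0%N).
have hi : (lexidx l c < prodl l)%N by apply: IH => // j hj; apply: (H j.+1).
apply: (@leq_trans (x * prodl l + prodl l)); first by rewrite ltn_add2l.
by rewrite addnC -mulSn leq_mul2r hx orbT.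
Qed.

Lemma kronA_E (l : seq nat) : forall k (c c' : seq nat) (i j : 'I_(prodl l)),
  size c = size l -> size c' = size l ->
  (forall m, (m < size l)%N -> (nth 0 c m < nth 0 l m)%N) ->
  (forall m, (m < size l)%N -> (nth 0 c' m < nth 0 l m)%N) ->
  val i = lexidx l c -> val j = lexidx l c' ->
  kronA R p k l i j =
  \prod_(m < size l) tk R p (k + m) (nth 0 l m) (nth 0 c m) (nth 0 c' m).
Proof.
elim: l => [|a l IH] k c c' i j.
  move=> _ _ _ _ _ _ /=; rewrite big_ord0 mxE.
  by move: i j; rewrite /prodl => i j; rewrite (ord1 i) (ord1 j) eqxx.
case: c => [|x c] //; case: c' => [|x' c'] //= [sz] [sz'] H H' hi hj.
have hx : (x < a)%N by apply: (H 0%N).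
have hx' : (x' < a)%N by apply: (H' 0%N).
have hc : (lexidx l c < prodl l)%N by apply: lexidx_lt => // m hm; apply: (H m.+1).
have hc' : (lexidx l c' < prodl l)%N by apply: lexidx_lt => // m hm; apply: (H' m.+1).
have -> : i = mxtens_index (Ordinal hx, Ordinal hc) by apply: val_inj; rewrite /= hi.
have -> : j = mxtens_index (Ordinal hx', Ordinal hc') by apply: val_inj; rewrite /= hj.
rewrite tensmxE mxE big_ord_recl /= addn0; congr (_ * _).
rewrite (IH k.+1 c c') //; first apply: eq_bigr => m _.
- by rewrite /= addSnnS.
- by move=> m hm; apply: (H m.+1).
- by move=> m hm; apply: (H' m.+1).
Qed.

End K.

Section TK.
Variable R : realType.
Variables (p : nat) (s : seq nat).

Definition xv k (l : nat) : R :=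
  if (k < p)%N then l%:R else (2 * l + 1)%:R / (2 * sk s k)%:R.

Lemma tk_Kk k l l' : (l < sk s k)%N -> (l' < sk s k)%N ->
  tk R p k (sk s k) l l' = @Kk R p k (xv k l) (xv k l').
Proof.
move=> hl hl'; rewrite /tk /Kk /xv; case: ifP => kp; first by rewrite eqr_nat.
set S := sk s k.
have Sp : (0 : R) < S%:R by rewrite ltr0n (leq_ltn_trans _ hl).
have S0 : (S%:R : R) != 0 by apply: lt0r_neq0.
set d := `|(l%:Z - l'%:Z)%R|%N.
have hd : `|(2 * l + 1)%:R / (2 * S)%:R - (2 * l' + 1)%:R / (2 * S)%:R| = d%:R / S%:R :> R.
  rewrite /d; case: (leqP l l') => h.
    rewrite distnEr // distrC.
    have -> : (2 * l' + 1)%:R / (2 * S)%:R - (2 * l + 1)%:R / (2 * S)%:R = (l' - l)%:R / S%:R :> R.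
      by rewrite natrB // !natrD; field; rewrite S0 /= lt0r_neq0 // addr_gt0.
    by rewrite ger0_norm // divr_ge0.
  rewrite (distnEl (ltnW h)).
  have -> : (2 * l + 1)%:R / (2 * S)%:R - (2 * l' + 1)%:R / (2 * S)%:R = (l - l')%:R / S%:R :> R.
    by rewrite natrB ?(ltnW h) // !natrD; field; rewrite S0 /= lt0r_neq0 // addr_gt0.
  by rewrite ger0_norm // divr_ge0.
have dS : (d <= S)%N.
  rewrite /d; case: (leqP l l') => h.
    by rewrite distnEr // (leq_trans (leq_subr _ _)) // ltnW.
  by rewrite (distnEl (ltnW h)) (leq_trans (leq_subr _ _)) // ltnW.
rewrite hd natrM natrB // natrX; field; exact: S0.
Qed.

End TK.

Section M.
Variable R : realType.
Variables (n p q : nat) (s : seq nat) (D : 'M[nat]_(n, p + q)).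

Definition lv (r : 'I_n) : seq nat := [seq D r j | j <- enum 'I_(p + q)].

Lemma lvlE r k (hk : (k < p + q)%N) : lvl D r k = D r (Ordinal hk).
Proof.
rewrite /lvl (nth_map (Ordinal hk)) ?size_enum_ord //; congr (D r _).
by apply: val_inj; rewrite /= nth_enum_ord.
Qed.

Lemma xrowE r k : @Defs.xrow R p q s n D r k = xv R p s k (lvl D r k).
Proof. by []. Qed.

End M.

Theorem lemma1 (R : realType) (n p q : nat) (s : seq nat)
    (D : 'M[nat]_(n, p + q)) :
  (0 < n)%N -> Utype s D ->
  let y := @yvec R p q s n D in
  @QQD2 R p q s n D =
    - (\prod_(k < p) ((5 * sk s k + 1)%:R / (4 * sk s k)%:R)) * (4 / 3) ^+ q
    + n%:R ^- 2 * (y^T *m Amx R p s *m y) ord0 ord0.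
Proof.
move=> n0 [hs [hlt _]] y.
pose C := \prod_(k < p + q) Cst R p s k.
have lvl_lt : forall r k, (k < p + q)%N -> (lvl D r k < sk s k)%N.
  by move=> r k hk; rewrite (@lvlE n p q D r k hk); exact: (hlt r (Ordinal hk)).
have pos : forall k, (k < p + q)%N -> (0 < sk s k)%N.
  by move=> k hk; exact: leq_ltn_trans (leq0n _) (lvl_lt (Ordinal n0) k hk).
have dl : forall r k, (k < p + q)%N -> @dom R p s k (@Defs.xrow R p q s n D r k).
  move=> r k hk; rewrite xrowE /dom /xv; case kp: (k < p)%N.
    by exists (lvl D r k); [exact: lvl_lt r k hk|].
  have hl := lvl_lt r k hk.
  have Sp : (0 : R) < (2 * sk s k)%:R by rewrite ltr0n muln_gt0 /= pos.
  rewrite divr_ge0 //= ler_pdivrMr // mul1r ler_nat.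
  by rewrite addn1 ltn_mul2l /= hl.
have T1 : intF p s (p + q) (fun t => intF p s (p + q) (fun z => Kern p q t z)) = C.
  rewrite (@intF_ext R p s (p + q) _ (fun t => C * \prod_(k < p + q) (fun (_ : nat) (_ : R) => (1:R)) k (t k))).
    rewrite (@intF_prod R p s (p + q) C (fun (_ : nat) (_ : R) => (1:R)) (fun _ => 1)) ?big1 ?mulr1 // => k hk c'.
    by apply: int1_1 => kp; exact: pos.
  move=> t ht; rewrite big1 // mulr1.
  have -> : (fun z => Kern p q t z) =
      (fun z => 1 * \prod_(k < p + q) (fun k x => @Kk R p k (t k) x) k (z k)).
    by apply/funext => z; rewrite mul1r.
  rewrite (@intF_prod R p s (p + q) 1 (fun k x => @Kk R p k (t k) x) (Cst R p s)) ?mul1r // => k hk c'.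
  exact: int1_K (ht k hk).
have T2 : forall i, intF p s (p + q) (fun t => Kern p q t (@Defs.xrow R p q s n D i)) = C.
  move=> i.
  have -> : (fun t => Kern p q t (@Defs.xrow R p q s n D i)) =
      (fun t => 1 * \prod_(k < p + q) (fun k x => @Kk R p k x (@Defs.xrow R p q s n D i k)) k (t k)).
    by apply/funext => z; rewrite mul1r.
  rewrite (@intF_prod R p s (p + q) 1 (fun k x => @Kk R p k x (@Defs.xrow R p q s n D i k)) (Cst R p s)) ?mul1r // => k hk c'.
  have -> : (fun x => c' * @Kk R p k x (@Defs.xrow R p q s n D i k)) =
            (fun x => c' * @Kk R p k (@Defs.xrow R p q s n D i k) x).
    by apply/funext => x; rewrite Kk_sym.
  exact: int1_K (dl i k hk).
have TC : C = \prod_(k < p) ((5 * sk s k + 1)%:R / (4 * sk s k)%:R) * (4 / 3) ^+ q.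
  rewrite /C big_split_ord /=; congr (_ * _).
    by apply: eq_bigr => k _; rewrite /Cst /= ltn_ord.
  rewrite (eq_bigr (fun _ => 4 / 3)); last by move=> k _; rewrite /Cst /= ltnNge leq_addr.
  by rewrite prodr_const card_ord.
have TS : \sum_(i < n) \sum_(j < n) Kern p q (@Defs.xrow R p q s n D i) (@Defs.xrow R p q s n D j)
          = (y^T *m Amx R p s *m y) ord0 ord0.
  have szlv : forall r, size (@lv n p q D r) = size s by move=> r; rewrite size_map size_enum_ord hs.
  have nthlv : forall r m, (m < size s)%N -> (nth 0 (@lv n p q D r) m < nth 0 s m)%N.
    by move=> r m hm; apply: lvl_lt; rewrite -hs.
  pose idxo r : 'I_(prodl s) := Ordinal (@lexidx_lt s (@lv n p q D r) (szlv r) (nthlv r)).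
  have eqI : forall r (v : 'I_(prodl s)), (idxo r == v) = (lexidx s (@lv n p q D r) == v).
    by move=> r v; apply/eqP/eqP => [<-|h] //; apply: val_inj.
  have yE : forall v, y v ord0 = \sum_(r < n) ((idxo r == v)%:R : R).
    move=> v; rewrite /y /yvec mxE -sum1_card natr_sum big_mkcond /=.
    apply: eq_bigr => r _; rewrite eqI.
    case: ifP => [/set_mem /= -> //|h].
    case E: (_ == _) => //; move/negP: h; case; apply: mem_set; exact: E.
  have L : forall G : 'I_(prodl s) -> R, \sum_v y v ord0 * G v = \sum_(r < n) G (idxo r).
    move=> G; under eq_bigr do rewrite yE mulr_suml.
    rewrite exchange_big /=; apply: eq_bigr => r _.
    rewrite (bigD1 (idxo r)) //= eqxx mul1r big1 ?addr0 // => v hv.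
    by rewrite eq_sym (negbTE hv) mul0r.
  have AE : forall r r', Amx R p s (idxo r) (idxo r') =
      Kern p q (@Defs.xrow R p q s n D r) (@Defs.xrow R p q s n D r').
    move=> r r'; rewrite /Amx (@kronA_E R p s 0 (@lv n p q D r) (@lv n p q D r') (idxo r) (idxo r') (szlv r) (szlv r') (nthlv r) (nthlv r') erefl erefl).
    have e : forall F : nat -> R, \prod_(m < size s) F m = \prod_(m < p + q) F m.
      by move=> F; rewrite hs.
    rewrite (e (fun m => tk R p (0 + m) (nth 0 s m) (nth 0 (@lv n p q D r) m) (nth 0 (@lv n p q D r') m))).
    rewrite /Kern; apply: eq_bigr => k _; rewrite add0n !xrowE.
    by apply: tk_Kk; apply: lvl_lt.
  have -> : (y^T *m Amx R p s *m y) ord0 ord0 =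
      \sum_(u < prodl s) y u ord0 * \sum_(v < prodl s) y v ord0 * Amx R p s v u.
    rewrite !mxE; apply: eq_bigr => u _; rewrite !mxE mulrC; congr (_ * _).
    by apply: eq_bigr => v _; rewrite mxE.
  symmetry; under eq_bigr => u _ do rewrite (L (fun v => Amx R p s v u)).
  rewrite (L (fun u => \sum_(r < n) Amx R p s (idxo r) u)) exchange_big /=.
  by apply: eq_bigr => r _; apply: eq_bigr => r' _; rewrite AE.
rewrite /QQD2 T1 (eq_bigr (fun _ => C)); last by move=> i _; exact: T2.
rewrite sumr_const card_ord TS TC.
have n0' : (n%:R : R) != 0 by rewrite pnatr_eq0 -lt0n.
by rewrite -mulr_natr; field.
Qed.
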